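(* Let $B=F_{2,3}$ be the bowtie and let $\vec B$ be an orientation of $B$ such that either (a) all four edges incident to the center are directed into the center, or all four are directed out of the center; or (b) in one triangle both edges incident to the center are directed into the center, and in the other triangle both edges incident to the center are directed out of the center. Then for all sufficiently large $n$, $D(n,\vec B)>2^{\mathrm{ex}(n,B)}$.
   Context: The bowtie $B=F_{2,3}$ consists of two triangles sharing exactly one vertex, the center. For a directed graph $\vec H$, $D(n,\vec H)$ is the maximum, over all $n$-vertex graphs $G$, of the number of orientations of $G$ containing no copy of $\vec H$; $\mathrm{ex}(n,B)$ is the Turán number of $B$ (equal to $\lfloor n^2/4\rfloor+1$ for large $n$). *)

(* Defs.v *)
From mathcomp Require Import all_boot.
Set Implicit Arguments. Unset Strict Implicit. Unset Printing Implicit Defensive.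

Definition simple_graph (V : finType) (E : {set {set V}}) : bool :=
  [forall e in E, #|e| == 2].

Definition orientation (V : finType) (E : {set {set V}}) (O : {set (V * V)}) : bool :=
  [forall u : V, forall v : V, ((u, v) \in O) ==> ((u != v) && ([set u; v] \in E))] &&
  [forall u : V, forall v : V, ((u != v) && ([set u; v] \in E)) ==>
                                (((u, v) \in O) != ((v, u) \in O))].

Definition contains_dicopy (V W : finType) (H : {set (V * V)}) (O : {set (W * W)}) : bool :=
  [exists f : {ffun V -> W}, injectiveb f && [forall p in H, (f p.1, f p.2) \in O]].

Definition contains_copy (V W : finType) (F : {set {set V}}) (E : {set {set W}}) : bool :=
  [exists f : {ffun V -> W}, injectiveb f && [forall e in F, (f @: e) \in E]].

Definition bc : 'I_5 := inord 0.
Definition b1 : 'I_5 := inord 1.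
Definition b2 : 'I_5 := inord 2.
Definition b3 : 'I_5 := inord 3.
Definition b4 : 'I_5 := inord 4.
Definition bowtie : {set {set 'I_5}} :=
  [set [set bc; b1]; [set bc; b2]; [set b1; b2]; [set bc; b3]; [set bc; b4]; [set b3; b4]].

Definition ex (V : finType) (n : nat) (F : {set {set V}}) : nat :=
  \max_(E : {set {set 'I_n}} | simple_graph E && ~~ contains_copy F E) #|E|.

Definition D (V : finType) (n : nat) (H : {set (V * V)}) : nat :=
  \max_(E : {set {set 'I_n}} | simple_graph E)
     #|[set O : {set ('I_n * 'I_n)} | orientation E O && ~~ contains_dicopy H O]|.

(* Main.v *)
Require Import Defs.
From mathcomp Require Import all_boot zify.
Set Implicit Arguments. Unset Strict Implicit. Unset Printing Implicit Defensive.


Lemma ar2 s e d : 6 <= s -> 2 * d <= s -> 4 * e + odd (s.-1) <= (s.-1) ^ 2 + 4 ->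
  4 * (e + d) + odd s <= s ^ 2 + 4.
Proof.
have [k [-> | ->]] : exists k, s = k.*2 \/ s = k.*2.+1.
  exists s./2; rewrite -{1 3}(odd_double_half s); case: (odd s); [right|left] => //.
  case: k => [|k]; first by [].
  rewrite doubleS /= odd_double /= -!muln2; nia.
rewrite /= odd_double /= -!muln2; nia.
Qed.
Lemma ar3 s e' d : 2 * e' <= (s.-1) * (s.-1).-1 -> d <= s.-1 -> 2 * (e' + d) <= s * s.-1.
Proof. case: s => [|s] /=; first by lia. case: s => [|s] /=; nia. Qed.

Section Graph.
Variable V : finType.
Variable E : {set {set V}}.
Hypothesis sE : simple_graph E.

Definition adj (x y : V) := [set x; y] \in E.
Lemma adj_sym x y : adj x y = adj y x.
Proof. by rewrite /adj setUC. Qed.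
Lemma adj_neq x y : adj x y -> x != y.
Proof.
move=> h; apply/negP=> /eqP exy; subst.
move: sE => /forallP/(_ [set y; y])/implyP/(_ h).
by rewrite setUid cards1.
Qed.

Ltac neqs := rewrite /= ?inE ?negb_or; repeat (apply/andP; split);
  try done; try (by [assumption | rewrite eq_sym; assumption]).

Lemma bowtie_copy c p q r s : uniq [:: c; p; q; r; s] ->
  adj c p -> adj c q -> adj p q -> adj c r -> adj c s -> adj r s ->
  contains_copy bowtie E.
Proof.
move=> U h1 h2 h3 h4 h5 h6.
apply/existsP; exists [ffun i : 'I_5 => nth c [:: c; p; q; r; s] i].
apply/andP; split.
  apply/injectiveP => i j; rewrite !ffunE => h; apply/val_inj.
  by apply: (uniqP c U) => //; rewrite inE /= ltn_ord.
have im x y : [ffun i : 'I_5 => nth c [:: c; p; q; r; s] i] @: [set x; y] =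
   [set nth c [:: c; p; q; r; s] x; nth c [:: c; p; q; r; s] y].
  by rewrite imsetU1 imset_set1 !ffunE.
apply/forallP => e; apply/implyP; rewrite /bowtie !inE.
rewrite /bc /b1 /b2 /b3 /b4;
  move=> /orP[/orP[/orP[/orP[/orP[|]|]|]|]|] /eqP ->; rewrite im !inordK //=;
  rewrite -/(adj _ _) //.
Qed.

Definition nbr (S : {set V}) x := [set y in S | adj x y].
Definition eS (S : {set V}) := [set e in E | e \subset S].

Lemma nbr_sub S x : nbr S x \subset S :\ x.
Proof.
apply/subsetP => y; rewrite !inE => /andP[yS axy].
by rewrite yS eq_sym (adj_neq axy).
Qed.

Lemma card_nbr (S : {set V}) x : x \in S -> #|nbr S x| < #|S|.
Proof.
move=> xS; rewrite (cardsD1 x S) xS.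
by apply: leq_ltn_trans (subset_leq_card (nbr_sub S x)) _.
Qed.

Lemma eS_split (S : {set V}) x : x \in S -> #|eS S| = #|eS (S :\ x)| + #|nbr S x|.
Proof.
move=> xS.
rewrite -(cardsID [set e : {set V} | x \in e] (eS S)) addnC.
congr (_ + _).
  apply: eq_card => e; rewrite !inE subsetD1.
  by case: (e \in E); case: (e \subset S); case: (x \in e).
have -> : eS S :&: [set e : {set V} | x \in e] = [set [set x; y] | y in nbr S x].
  apply/setP => e; rewrite !inE; apply/idP/idP.
    case/andP=> /andP[eE eSS] xe.
    move: sE => /forallP/(_ e)/implyP/(_ eE)/cards2P[a [b [ab eab]]].
    move: xe; rewrite eab !inE => /orP[]/eqP xa; subst.
      apply/imsetP; exists b => //; rewrite !inE /adj eE andbT.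
      by apply: (subsetP eSS); rewrite !inE eqxx orbT.
    apply/imsetP; exists a; last by rewrite setUC.
    rewrite !inE /adj setUC eE andbT.
    by apply: (subsetP eSS); rewrite !inE eqxx.
  case/imsetP=> y; rewrite inE => /andP[yS axy] ->.
  rewrite -/(adj x y) axy !inE eqxx /= andbT.
  apply/subsetP => z; rewrite !inE => /orP[]/eqP ->  //.
  idtac.
apply: card_in_imset => y z; rewrite !inE => /andP[_ axy] /andP[_ axz] h.
have : y \in [set x; z] by rewrite -h !inE eqxx orbT.
rewrite !inE => /orP[]/eqP // yx; subst.
by move: (adj_neq axy); rewrite eqxx.
Qed.


Lemma codeg (S : {set V}) x y :
  #|nbr S x| + #|nbr S y| <= #|S| + #|nbr S x :&: nbr S y|.
Proof.
rewrite -cardsUI leq_add2r; apply: subset_leq_card.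
rewrite subUset; apply/andP; split; apply/subsetP => z; rewrite inE; by case/andP.
Qed.

Lemma nbrD1 (S : {set V}) x y : y != x ->
  #|nbr S y| = (adj y x && (x \in S)) + #|nbr (S :\ x) y|.
Proof.
move=> yx; rewrite (cardsD1 x (nbr S y)) inE andbC; congr (_ + _).
by apply: eq_card => z; rewrite !inE; case: (z == x); rewrite ?andbF.
Qed.

Lemma handshake (S : {set V}) : \sum_(x in S) #|nbr S x| = 2 * #|eS S|.
Proof.
have [n] := ubnP #|S|; elim: n S => // n IH S ltS.
case: (set_0Vmem S) => [->|[x xS]].
  rewrite big_set0; suff -> : eS set0 = set0 by rewrite cards0.
  apply/setP => e; rewrite !inE subset0; apply/negP => /andP[eE /eqP e0].
  by move: sE => /forallP/(_ e)/implyP/(_ eE); rewrite e0 cards0.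
rewrite (big_setD1 x xS) /= (eS_split xS) mulnDr -(IH (S :\ x)); last first.
  by move: ltS; rewrite (cardsD1 x S) xS add1n ltnS.
have -> : \sum_(y in S :\ x) #|nbr S y| =
          \sum_(y in S :\ x) (adj y x : nat) + \sum_(y in S :\ x) #|nbr (S :\ x) y|.
  rewrite -big_split /=; apply: eq_bigr => y; rewrite !inE => /andP[yx _].
  by rewrite (nbrD1 S yx) xS andbT.
suff -> : \sum_(y in S :\ x) (adj y x : nat) = #|nbr S x| by rewrite addnA addnn -mul2n addnC.
rewrite -big_mkcondr /= sum1_card; apply: eq_card => y; rewrite -topredE /= !inE adj_sym.
by case h: (adj x y); rewrite ?andbF //= eq_sym (adj_neq h).
Qed.


Hypothesis nB : ~~ contains_copy bowtie E.

Lemma nbrE (S : {set V}) x y : (y \in nbr S x) = (y \in S) && adj x y.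
Proof. by rewrite inE. Qed.

Lemma bowtie_false c p q r s : uniq [:: c; p; q; r; s] ->
  adj c p -> adj c q -> adj p q -> adj c r -> adj c s -> adj r s -> False.
Proof. by move=> *; apply: (negP nB); apply: (@bowtie_copy c p q r s). Qed.

Lemma link4 (S : {set V}) v a b c z :
  a \in nbr S v -> b \in nbr S v -> c \in nbr S v -> z \in nbr S v ->
  adj a b -> adj c z -> a != c -> a != z -> b != c -> b != z -> False.
Proof.
rewrite !nbrE => /andP[_ va] /andP[_ vb] /andP[_ vc] /andP[_ vz] ab cz *.
have := adj_neq va; have := adj_neq vb; have := adj_neq vc; have := adj_neq vz.
have := adj_neq ab; have := adj_neq cz => *.
by apply: (@bowtie_false v a b c z) => //; neqs.
Qed.

Definition com (S : {set V}) x y := nbr S x :&: nbr S y.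

Lemma com_sub2 (S : {set V}) v a b c :
  a \in nbr S v -> b \in nbr S v -> c \in nbr S v -> adj a b -> c != a -> c != b ->
  com S v c \subset [set a; b].
Proof.
move=> na nb nc ab ca cb; apply/subsetP => z; rewrite !inE.
case/andP=> /andP[zS vz] /andP[_ cz].
case: (boolP ((z == a) || (z == b))) => // /norP[za zb]; exfalso.
have nz : z \in nbr S v by rewrite nbrE zS.
by apply: (link4 na nb nc nz ab cz); rewrite // eq_sym.
Qed.

Lemma pickC (S : {set V}) v a b : 3 < #|nbr S v| ->
  exists c c', [/\ c \in nbr S v :\ a :\ b, c' \in nbr S v :\ a :\ b & c != c'].
Proof.
move=> h.
have : 1 < #|nbr S v :\ a :\ b|.
  move: h; rewrite (cardsD1 a (nbr S v)) (cardsD1 b (nbr S v :\ a)).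
  by case: (a \in _); case: (b \in _) => /=; lia.
by case/card_gt1P => c [c' [*]]; exists c, c'.
Qed.

Lemma H1 (S : {set V}) v : 3 < #|nbr S v| ->
  (forall l, l \in nbr S v -> 1 < #|com S v l|) -> False.
Proof.
move=> dv hc.
have [a na] : exists a, a \in nbr S v by apply/card_gt0P; apply: leq_trans dv.
have [b] : exists b, b \in com S v a by apply/card_gt0P; apply: leq_trans (hc a na).
rewrite inE => /andP[nb]; rewrite nbrE => /andP[_ ab].
have [c [c' [cC c'C cc']]] := pickC a b dv.
have key : forall c, c \in nbr S v :\ a :\ b -> adj c a && adj c b.
  move=> d; rewrite !inE => /andP[db /andP[da nd]].
  have nd' : d \in nbr S v by rewrite nbrE.
  have sub := com_sub2 na nb nd' ab da db.
  have : com S v d == [set a; b].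
    by rewrite eqEcard sub cards2 /=; apply: leq_trans (hc d nd'); case: (a != b).
  move/eqP=> e; have : a \in com S v d by rewrite e !inE eqxx.
  have : b \in com S v d by rewrite e !inE eqxx orbT.
  by rewrite !inE => /and3P[_ _ ->] /and3P[_ _ ->].
case/andP: (key c cC) => ca _; case/andP: (key c' c'C) => _ c'b.
move: cC c'C; rewrite !in_setD1 => /and3P[cb ca' nc] /and3P[c'b' c'a nc'].
have ab' := adj_neq ab.
by apply: (link4 nc na nc' nb ca c'b) => //; rewrite eq_sym.
Qed.


Ltac addneq := repeat match goal with H : is_true (adj ?a ?b) |- _ =>
  lazymatch goal with _ : is_true (a != b) |- _ => fail | _ => have := adj_neq H; move=> ? end end.

Lemma ar1 A I a b s : A + I = a + b -> I <= 1 -> s < a + b -> s <= A.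
Proof. lia. Qed.

Lemma com_pos (S : {set V}) x y : #|S| < #|nbr S x| + #|nbr S y| -> 0 < #|com S x y|.
Proof. move=> h; have := codeg S x y; rewrite /com; lia. Qed.

Lemma H2 (S : {set V}) v : (forall x, x \in S -> #|S| < 2 * #|nbr S x|) ->
  v \in S -> 3 < #|nbr S v| -> (#|nbr S v|).+2 <= #|S| -> False.
Proof.
move=> hd vS dv dvs.
have hsum x y : x \in S -> y \in S -> #|S| < #|nbr S x| + #|nbr S y|.
  by move=> xS yS; have := hd x xS; have := hd y yS; lia.
have [a na] : exists a, a \in nbr S v by apply/card_gt0P; apply: leq_trans dv.
have aS : a \in S by move: na; rewrite nbrE => /andP[].
have [b] : exists b, b \in com S v a by apply/card_gt0P; apply: com_pos; apply: hsum.
rewrite inE => /andP[nb]; rewrite nbrE => /andP[bS ab].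
have ab' := adj_neq ab.
set C := nbr S v :\ a :\ b.
have inC d : d \in C -> [/\ d != b, d != a & d \in nbr S v] by rewrite !in_setD1 => /and3P[].
have hC d : d \in C -> com S v d \subset [set a; b].
  by case/inC => db da nd; apply: com_sub2.
have hC1 d : d \in C -> adj d a || adj d b.
  move=> dC; have [_ _ nd] := inC d dC.
  have dS : d \in S by move: nd; rewrite nbrE => /andP[].
  have [z] : exists z, z \in com S v d by apply/card_gt0P; apply: com_pos; apply: hsum.
  move=> zc; have := subsetP (hC d dC) z zc; move: zc.
  by rewrite !inE => /andP[_ /andP[_ dz]] /orP[]/eqP zab; rewrite -zab dz ?orbT.
have [c [c' [cC c'C cc']]] := pickC a b dv.
have [u [w [nu nw uw Cuw [hw hCuw]]]] : exists u w, [/\ u \in nbr S v, w \in nbr S v, adj u w,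
     (forall d, d \in C -> (d != u) && (d != w)) & (forall d, d \in C -> adj d w) /\
     (forall d, d \in C -> com S v d \subset [set u; w])].
  case: (boolP [forall d in C, adj d a]) => [/forall_inP ha|].
    exists b, a; split => //; first by rewrite adj_sym.
      by move=> d /inC[db da _]; rewrite db da.
    by split => // d dC; rewrite setUC; apply: hC.
  case/forall_inPn => c1 c1C na1.
  have c1b : adj c1 b by move: (hC1 c1 c1C); rewrite (negbTE na1).
  exists a, b; split => //; first by move=> d /inC[db da _]; rewrite db da.
  split => //.
  move=> d dC; case: (eqVneq d c1) => [->//|dc1].
  case: (boolP (adj d a)) => [da|]; last by move: (hC1 d dC) => /orP[->|].
  have [c1b' c1a nc1] := inC c1 c1C; have [db' da' nd] := inC d dC.
  by exfalso; apply: (link4 nc1 nb nd na c1b da); rewrite // eq_sym.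
have uw' := adj_neq uw.
have hU d : d \in C -> ~~ adj d u.
  move=> dC; apply/negP => du.
  have [d' [d'C dd']] : exists d', d' \in C /\ d != d'.
    case: (eqVneq d c) => [->|]; first by exists c'.
    by exists c.
  have [_ _ nd] := inC d dC; have [_ _ nd'] := inC d' d'C.
  case/andP: (Cuw d dC) => du' dw; case/andP: (Cuw d' d'C) => d'u d'w.
  by apply: (link4 nd nu nd' nw du (hw d' d'C)); rewrite // eq_sym.
have hcod d : d \in C -> #|com S v d| <= 1.
  move=> dC; rewrite -(cards1 w); apply: subset_leq_card; apply/subsetP => z zc.
  have := subsetP (hCuw d dC) z zc; move: zc.
  rewrite !inE => /andP[_ /andP[_ dz]] /orP[/eqP zu|//].
  by move: (hU d dC); rewrite -zu dz.
have hunion d : d \in C -> S \subset nbr S d :|: nbr S v.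
  move=> dC; have [_ _ nd] := inC d dC.
  have dS : d \in S by move: nd; rewrite nbrE => /andP[].
  have sub : nbr S d :|: nbr S v \subset S.
    by rewrite subUset; apply/andP; split; apply/subsetP => z; rewrite nbrE => /andP[].
  suff /eqP -> : nbr S d :|: nbr S v == S by [].
  rewrite eqEcard sub /=.
  have := cardsUI (nbr S d) (nbr S v); rewrite setIC -/(com S v d).
  by move=> h; apply: (ar1 h); [apply: hcod | apply: hsum].
have [x xS xN] : exists2 x, x \in S & x \notin v |: nbr S v.
  apply/subsetPn; apply/negP => sub; have := subset_leq_card sub.
  rewrite cardsU1; move: dvs; clear; case: (v \notin _) => /=; lia.
move: xN; rewrite in_setU1 negb_or => /andP[xv xnv].
have hx d : d \in C -> adj d x.
  move=> dC; have := subsetP (hunion d dC) x xS; rewrite in_setU (negbTE xnv) orbF.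
  by rewrite nbrE => /andP[].
have [_ _ nc] := inC c cC; have [_ _ nc'] := inC c' c'C.
have cS : c \in S by move: nc; rewrite nbrE => /andP[].
have [y] : exists y, y \in com S c x by apply/card_gt0P; apply: com_pos; apply: hsum.
rewrite inE !nbrE => /andP[/andP[yS cy] /andP[_ xy]].
have yv : y != v.
  apply/eqP => e; subst y; move: xnv; rewrite nbrE xS /= adj_sym xy; done.
have neqN z : z \in nbr S v -> z != x.
  by move=> zn; apply/eqP => e; subst z; rewrite zn in xnv.
have ux := neqN u nu; have wx := neqN w nw.
move: nu nw nc nc'; rewrite !nbrE => /andP[_ vu] /andP[_ vw] /andP[_ vc] /andP[_ vc'].
have cx := hx c cC; have c'x := hx c' c'C; have cw := hw c cC; have c'w := hw c' c'C.
case/andP: (Cuw c cC) => cu cw'; case/andP: (Cuw c' c'C) => c'u c'w'.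
have := adj_neq vu; have := adj_neq vw; have := adj_neq vc; have := adj_neq vc'.
have := adj_neq cx; have := adj_neq c'x; have := adj_neq cw; have := adj_neq c'w.
have := adj_neq cy; have := adj_neq xy => *.
case: (eqVneq y w) => [e|yw].
  subst y.
  apply: (@bowtie_false w v u x c'); neqs; by rewrite // adj_sym.
apply: (@bowtie_false c v w x y); neqs; by rewrite // adj_sym.
Qed.

Lemma eS0 : eS set0 = set0.
Proof.
apply/setP => e; rewrite !inE subset0; apply/negP => /andP[eE /eqP e0].
by move: sE => /forallP/(_ e)/implyP/(_ eE); rewrite e0 cards0.
Qed.

Lemma cardD1 (S : {set V}) x : x \in S -> #|S :\ x| = #|S|.-1.
Proof. by move=> xS; rewrite (cardsD1 x S) xS. Qed.

Lemma eS_triv (S : {set V}) : 2 * #|eS S| <= #|S| * #|S|.-1.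
Proof.
have [n] := ubnP #|S|; elim: n S => // n IH S ltS.
case: (set_0Vmem S) => [->|[x xS]]; first by rewrite eS0 cards0.
rewrite (eS_split xS); apply: ar3.
  rewrite -(cardD1 xS); apply: IH; rewrite (cardD1 xS).
  have s0 : 0 < #|S| by apply/card_gt0P; exists x.
  by move: ltS s0; move: #|S| => m; lia.
by have := card_nbr xS; move: #|S| => m; lia.
Qed.

Lemma K4 (S : {set V}) : #|S| = 4 -> #|eS S| = 6 ->
  forall u w, u \in S -> w \in S -> u != w -> adj u w.
Proof.
move=> s4 e6 u w uS wS uw.
have := eS_triv (S :\ u); rewrite (cardD1 uS) s4 /=.
move: e6; rewrite (eS_split uS) => e6 h.
have sub := nbr_sub S u.
have : nbr S u == S :\ u.
  rewrite eqEcard sub (cardD1 uS) s4 /=; move: e6 h; move: #|eS (S :\ u)| => a; move: #|nbr S u| => b; lia.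
move/eqP=> e; have : w \in nbr S u by rewrite e !inE eq_sym uw.
by rewrite nbrE => /andP[].
Qed.

Lemma base5 (S : {set V}) : #|S| = 5 -> #|eS S| <= 7.
Proof.
move=> s5; rewrite leqNgt; apply/negP => big.
case: (boolP [exists x in S, #|nbr S x| <= 2]) => [/exists_inP[x xS hx]|].
  set S' := S :\ x.
  have s4 : #|S'| = 4 by rewrite cardD1 // s5.
  have := eS_triv S'; rewrite s4 /=; move: big; rewrite (eS_split xS) -/S' => big tr.
  have e6 : #|eS S'| = 6 by move: big tr hx; move: #|eS S'| => a; move: #|nbr S x| => b; lia.
  have d2 : #|nbr S x| == 2 by move: big tr hx; move: #|eS S'| => a; move: #|nbr S x| => b; lia.
  have k4 := K4 s4 e6.
  case/cards2P: d2 => a [b [ab eab]].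
  have : a \in nbr S x by rewrite eab !inE eqxx.
  have : b \in nbr S x by rewrite eab !inE eqxx orbT.
  rewrite !nbrE => /andP[bS xb] /andP[aS xa].
  have := adj_neq xa; have := adj_neq xb => xb' xa'.
  have aS' : a \in S' by rewrite !inE eq_sym xa' aS.
  have bS' : b \in S' by rewrite !inE eq_sym xb' bS.
  have : #|S' :\ a :\ b| == 2.
    by rewrite (cardD1 _) ?(cardD1 aS') ?s4 // in_setD1 eq_sym ab bS'.
  case/cards2P => c [d [cd ecd]].
  have : c \in S' :\ a :\ b by rewrite ecd !inE eqxx.
  have : d \in S' :\ a :\ b by rewrite ecd !inE eqxx orbT.
  rewrite !in_setD1 => /and3P[db da /andP[dx dS]] /and3P[cb ca /andP[cx cS]].
  have cS' : c \in S' by rewrite in_setD1 cx cS.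
  have dS' : d \in S' by rewrite in_setD1 dx dS.
  apply: (@bowtie_false a x b c d); first by neqs.
  - by rewrite adj_sym.
  - by apply: (k4 a b aS' bS').
  - done.
  - by apply: (k4 a c aS' cS'); rewrite eq_sym.
  - by apply: (k4 a d aS' dS'); rewrite eq_sym.
  - by apply: (k4 c d cS' dS').
rewrite negb_exists_in => /forall_inP hd.
have [v vS dv] : exists2 v, v \in S & 3 < #|nbr S v|.
  apply/exists_inP; rewrite -[X in is_true X]negbK negb_exists_in; apply/negP => /forall_inP h.
  have : \sum_(x in S) #|nbr S x| <= \sum_(x in S) 3.
    by apply: leq_sum => x xS; rewrite leqNgt; apply: h.
  by rewrite handshake sum_nat_const s5; lia.
apply: (@H1 S v) => // l; rewrite nbrE => /andP[lS _].
have := codeg S v l; rewrite s5 -/(com S v l).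
have := hd l lS; have := hd v vS; rewrite -!ltnNge; lia.
Qed.

Theorem turan (S : {set V}) : 5 <= #|S| -> 4 * #|eS S| + odd #|S| <= #|S| ^ 2 + 4.
Proof.
have [n] := ubnP #|S|; elim: n S => // n IH S ltS s5.
case: (eqVneq #|S| 5) => [e5|n5].
  by have := base5 e5; rewrite e5 /=; lia.
have s6 : 6 <= #|S| by move: s5 n5; move: #|S| => m; lia.
case: (boolP [exists x in S, 2 * #|nbr S x| <= #|S|]) => [/exists_inP[x xS hx]|].
  rewrite (eS_split xS); apply: ar2 => //.
  rewrite -(cardD1 xS); apply: IH; rewrite (cardD1 xS).
    by move: ltS s6; move: #|S| => m; lia.
  by move: s6; move: #|S| => m; lia.
rewrite negb_exists_in => /forall_inP hd'.
have hd x : x \in S -> #|S| < 2 * #|nbr S x| by move=> xS; rewrite ltnNge hd'.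
have [v vS] : exists v, v \in S by apply/card_gt0P; apply: leq_trans s5.
have dv : 3 < #|nbr S v| by have := hd v vS; move: s6; move: #|S| => m; lia.
case: (leqP (#|nbr S v|).+2 #|S|) => [h|h]; first by case: (H2 hd vS dv h).
case: (@H1 S v dv) => l; rewrite nbrE => /andP[lS _].
have := codeg S v l; rewrite -/(com S v l).
have := hd l lS; move: h s6; move: #|S| => m; lia.
Qed.

End Graph.


Section Constr.
Variables p q : nat.
Local Notation n := (p + q).+1.

Definition gadj (x y : 'I_n) : bool :=
  (x != y) && ((val x == 0) || (val y == 0) || ((val x <= p) != (val y <= p))).

Lemma gadj_sym x y : gadj x y = gadj y x.
Proof.
rewrite /gadj [y == x]eq_sym; case: (x == y) => //=.
by case: (val x == 0); case: (val y == 0); case: (val x <= p); case: (val y <= p).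
Qed.

Definition G : {set {set 'I_n}} :=
  [set e : {set 'I_n} | (#|e| == 2) && [forall x in e, forall y in e, (x != y) ==> gadj x y]].

Lemma G_simple : simple_graph G.
Proof. by apply/forallP => e; apply/implyP; rewrite inE => /andP[]. Qed.

Lemma inG x y : ([set x; y] \in G) = gadj x y.
Proof.
rewrite inE cards2; case: (eqVneq x y) => [->|xy] /=.
  by rewrite /gadj eqxx.
apply/forall_inP/idP => [h|g u].
  have hx : x \in [set x; y] by rewrite !inE eqxx.
  by have := forall_inP (h x hx) y; rewrite !inE eqxx orbT xy => /(_ isT).
rewrite !inE => /orP[]/eqP ->; apply/forall_inP => v; rewrite !inE => /orP[]/eqP ->;
  by rewrite ?eqxx // ?xy // eq_sym xy gadj_sym.
Qed.

Definition arc (g : 'I_n -> 'I_n -> bool) (h : 'I_n -> bool) (x y : 'I_n) :=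
  gadj x y && (if val x == 0 then h y else if val y == 0 then ~~ h x
               else if val x <= p then g x y else ~~ g y x).

Definition mkO g h : {set 'I_n * 'I_n} := [set uv | arc g h uv.1 uv.2].

Lemma mkO_orient g h : orientation G (mkO g h).
Proof.
apply/andP; split; apply/forallP => u; apply/forallP => v; apply/implyP.
  by rewrite inE /arc /= => /andP[guv _]; rewrite inG guv andbT; case/andP: guv.
case/andP=> uv; rewrite inG => guv; rewrite !inE /arc /= guv gadj_sym guv /=.
move: guv; rewrite /gadj uv /=.
case: (eqVneq (val u) 0) => [u0|u0]; case: (eqVneq (val v) 0) => [v0|v0] //=.
- by move: uv; rewrite -val_eqE u0 v0.
- by case: (h v).
- by case: (h u).
- by case: (val u <= p); case: (val v <= p); case: (g u v); case: (g v u).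
Qed.

Lemma struct_key (c x y : 'I_n) : val c != 0 -> gadj c x -> gadj c y -> gadj x y ->
  (val x == 0) || (val y == 0).
Proof.
rewrite /gadj => c0 /andP[_ hx] /andP[_ hy] /andP[_ hxy]; move: hx hy hxy.
rewrite (negbTE c0) /=.
by case: (val x == 0); case: (val y == 0); case: (val c <= p); case: (val x <= p);
  case: (val y <= p).
Qed.

Lemma struct (c x1 x2 x3 x4 : 'I_n) : uniq [:: c; x1; x2; x3; x4] ->
  gadj c x1 -> gadj c x2 -> gadj x1 x2 -> gadj c x3 -> gadj c x4 -> gadj x3 x4 ->
  [/\ val c = 0, (val x1 <= p) != (val x2 <= p) & (val x3 <= p) != (val x4 <= p)].
Proof.
rewrite /= !inE !negb_or -!val_eqE => /and5P[/and4P[c1 c2 c3 c4] /and3P[d12 d13 d14]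
   /andP[d23 d24] d34 _] g1 g2 g12 g3 g4 g34.
have c0 : val c = 0.
  case: (eqVneq (val c) 0) => // c0; exfalso.
  move: (struct_key c0 g1 g2 g12) (struct_key c0 g3 g4 g34) d13 d14 d23 d24.
  by case/orP => /eqP ->; case/orP => /eqP ->; rewrite eqxx.
have side x y : val c != val x -> val c != val y -> gadj x y -> (val x <= p) != (val y <= p).
  rewrite c0 /gadj => hx hy /andP[_]; rewrite eq_sym (negbTE hx) eq_sym (negbTE hy) //.
split => //; by apply: side.
Qed.

Lemma bow_edge (H : {set 'I_5 * 'I_5}) i j : orientation bowtie H -> i != j ->
  [set i; j] \in bowtie -> ((i, j) \in H) || ((j, i) \in H).
Proof.
case/andP => _ /forallP/(_ i)/forallP/(_ j)/implyP => h ij ib.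
by move: (h (introT andP (conj ij ib))); case: ((i, j) \in H); case: ((j, i) \in H).
Qed.

Lemma arc_in0 g h (x y : 'I_n) : val y = 0 -> val x != 0 -> arc g h x y -> ~~ h x.
Proof. by rewrite /arc => -> /negbTE -> /andP[]. Qed.

Lemma arc_out0 g h (x y : 'I_n) : val x = 0 -> arc g h x y -> h y.
Proof. by rewrite /arc => -> /andP[]. Qed.

Lemma copy_struct g h (H : {set 'I_5 * 'I_5}) : orientation bowtie H ->
  contains_dicopy H (mkO g h) ->
  exists f : {ffun 'I_5 -> 'I_n}, [/\ injective f, val (f bc) = 0,
    (forall i j, (i, j) \in H -> arc g h (f i) (f j)),
    (val (f b1) <= p) != (val (f b2) <= p) & (val (f b3) <= p) != (val (f b4) <= p)].
Proof.
move=> oH /existsP[f /andP[/injectiveP finj /forall_inP fH]].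
have fa i j : (i, j) \in H -> arc g h (f i) (f j) by move=> /fH; rewrite inE.
have ga i j : i != j -> [set i; j] \in bowtie -> gadj (f i) (f j).
  move=> ij ib; case/orP: (bow_edge oH ij ib) => /fa /andP[] //.
  by rewrite gadj_sym.
have U : uniq [:: f bc; f b1; f b2; f b3; f b4].
  by rewrite (map_inj_uniq finj [:: bc; b1; b2; b3; b4]) /= !inE -!val_eqE /= !inordK.
have E1 : [set bc; b1] \in bowtie by rewrite /bowtie !inE eqxx ?orbT.
have E2 : [set bc; b2] \in bowtie by rewrite /bowtie !inE eqxx ?orbT.
have E3 : [set b1; b2] \in bowtie by rewrite /bowtie !inE eqxx ?orbT.
have E4 : [set bc; b3] \in bowtie by rewrite /bowtie !inE eqxx ?orbT.
have E5 : [set bc; b4] \in bowtie by rewrite /bowtie !inE eqxx ?orbT.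
have E6 : [set b3; b4] \in bowtie by rewrite /bowtie !inE eqxx ?orbT.
have n1 : bc != b1 by rewrite -val_eqE /= !inordK.
have n2 : bc != b2 by rewrite -val_eqE /= !inordK.
have n3 : b1 != b2 by rewrite -val_eqE /= !inordK.
have n4 : bc != b3 by rewrite -val_eqE /= !inordK.
have n5 : bc != b4 by rewrite -val_eqE /= !inordK.
have n6 : b3 != b4 by rewrite -val_eqE /= !inordK.
have [c0 s12 s34] := struct U (ga _ _ n1 E1) (ga _ _ n2 E2) (ga _ _ n3 E3)
  (ga _ _ n4 E4) (ga _ _ n5 E5) (ga _ _ n6 E6).
by exists f; split.
Qed.

Lemma copy_gen g h (H : {set 'I_5 * 'I_5}) : orientation bowtie H ->
  contains_dicopy H (mkO g h) ->
  exists x : 'I_5 -> 'I_n, [/\ uniq [:: x b1; x b2; x b3; x b4],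
    (forall i, i != bc -> val (x i) != 0),
    ((val (x b1) <= p) != (val (x b2) <= p)) && ((val (x b3) <= p) != (val (x b4) <= p)),
    (forall i, i != bc -> (i, bc) \in H -> ~~ h (x i)) &
    (forall i, i != bc -> (bc, i) \in H -> h (x i))].
Proof.
move=> oH /(copy_struct oH) [f [finj c0 fa s12 s34]].
have nz i : i != bc -> val (f i) != 0.
  by move=> ib; apply: contra ib => /eqP h0; apply/eqP/finj/val_inj; rewrite h0 c0.
exists f; split => //; last first.
- by move=> i ib hi; apply: (arc_out0 c0 (fa _ _ hi)).
- by move=> i ib hi; apply: (arc_in0 c0 (nz i ib) (fa _ _ hi)).
- by rewrite s12 s34.
- by rewrite (map_inj_uniq finj [:: b1; b2; b3; b4]) /= !inE -!val_eqE /= !inordK.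
Qed.

Definition validA (h : 'I_n -> bool) := forall x1 x2 x3 x4 : 'I_n,
  uniq [:: x1; x2; x3; x4] -> val x1 != 0 -> val x2 != 0 -> val x3 != 0 -> val x4 != 0 ->
  (val x1 <= p) != (val x2 <= p) -> (val x3 <= p) != (val x4 <= p) ->
  ~~ h x1 -> ~~ h x2 -> ~~ h x3 -> ~~ h x4 -> False.

Definition validB (h : 'I_n -> bool) := forall x1 x2 x3 x4 : 'I_n,
  uniq [:: x1; x2; x3; x4] -> val x1 != 0 -> val x2 != 0 -> val x3 != 0 -> val x4 != 0 ->
  (val x1 <= p) != (val x2 <= p) -> (val x3 <= p) != (val x4 <= p) ->
  ~~ h x1 -> ~~ h x2 -> h x3 -> h x4 -> False.

Lemma bne : [/\ b1 != bc, b2 != bc, b3 != bc & b4 != bc].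
Proof. by split; rewrite -val_eqE /= !inordK. Qed.

Lemma free1 g h (H : {set 'I_5 * 'I_5}) : orientation bowtie H -> validA h ->
  [/\ (b1, bc) \in H, (b2, bc) \in H, (b3, bc) \in H & (b4, bc) \in H] ->
  ~~ contains_dicopy H (mkO g h).
Proof.
move=> oH vA [h1 h2 h3 h4]; apply/negP => /(copy_gen oH) [x [U nz /andP[s12 s34] hin hout]].
have [e1 e2 e3 e4] := bne.
by apply: (vA _ _ _ _ U (nz _ e1) (nz _ e2) (nz _ e3) (nz _ e4) s12 s34);
  apply: hin.
Qed.

Lemma free2 g h (H : {set 'I_5 * 'I_5}) : orientation bowtie H -> validA (fun v => ~~ h v) ->
  [/\ (bc, b1) \in H, (bc, b2) \in H, (bc, b3) \in H & (bc, b4) \in H] ->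
  ~~ contains_dicopy H (mkO g h).
Proof.
move=> oH vA [h1 h2 h3 h4]; apply/negP => /(copy_gen oH) [x [U nz /andP[s12 s34] hin hout]].
have [e1 e2 e3 e4] := bne.
by apply: (vA _ _ _ _ U (nz _ e1) (nz _ e2) (nz _ e3) (nz _ e4) s12 s34);
  rewrite negbK; apply: hout.
Qed.

Lemma free3 g h (H : {set 'I_5 * 'I_5}) : orientation bowtie H -> validB h ->
  [/\ (b1, bc) \in H, (b2, bc) \in H, (bc, b3) \in H & (bc, b4) \in H] ->
  ~~ contains_dicopy H (mkO g h).
Proof.
move=> oH vB [h1 h2 h3 h4]; apply/negP => /(copy_gen oH) [x [U nz /andP[s12 s34] hin hout]].
have [e1 e2 e3 e4] := bne.
by apply: (vB _ _ _ _ U (nz _ e1) (nz _ e2) (nz _ e3) (nz _ e4) s12 s34);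
  [apply: hin | apply: hin | apply: hout | apply: hout].
Qed.

Lemma free4 g h (H : {set 'I_5 * 'I_5}) : orientation bowtie H -> validB h ->
  [/\ (bc, b1) \in H, (bc, b2) \in H, (b3, bc) \in H & (b4, bc) \in H] ->
  ~~ contains_dicopy H (mkO g h).
Proof.
move=> oH vB [h1 h2 h3 h4]; apply/negP => /(copy_gen oH) [x [U nz /andP[s12 s34] hin hout]].
have [e1 e2 e3 e4] := bne.
have U' : uniq [:: x b3; x b4; x b1; x b2].
  by rewrite -(rot_uniq 2).
by apply: (vB _ _ _ _ U' (nz _ e3) (nz _ e4) (nz _ e1) (nz _ e2) s34 s12);
  [apply: hin | apply: hin | apply: hout | apply: hout].
Qed.

Notation Pat := ((bool * {ffun 'I_q -> bool}) + {ffun 'I_(p - 2) -> bool})%type.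

Definition ob (b : {ffun 'I_q -> bool}) (k : nat) : bool :=
  if (insub k : option 'I_q) is Some j then b j else false.
Definition oa (a : {ffun 'I_(p - 2) -> bool}) (k : nat) : bool :=
  if (insub k : option 'I_(p - 2)) is Some j then a j else false.

Definition hA (P : Pat) (v : 'I_n) : bool :=
  match P with
  | inl (c, b) => if val v <= p then (if c then true else val v != 1) else ob b (val v - p.+1)
  | inr a => if val v <= p then
               (if val v == 1 then false else if val v == 2 then false else oa a (val v - 3))
             else true
  end.

Definition hB (P : Pat) (v : 'I_n) : bool :=
  match P with
  | inl (c, b) => if val v <= p then c else ob b (val v - p.+1)
  | inr a => if val v <= p then
               (if val v == 1 then true else if val v == 2 then false else oa a (val v - 3))
             else true
  end.

Lemma pick_side (P : 'I_n -> bool) x1 x2 : (val x1 <= p) != (val x2 <= p) -> P x1 -> P x2 ->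
  exists a b, [/\ a \in [:: x1; x2], val a <= p, P a, p < val b & P b].
Proof.
case: (leqP (val x1) p) => s1 /= s2 h1 h2.
  by exists x1, x2; split; rewrite ?inE ?eqxx // ltnNge.
by exists x2, x1; split; rewrite ?inE ?eqxx ?orbT // -(negbK (_ <= _)).
Qed.

Lemma uniq_cross (x1 x2 x3 x4 a a' : 'I_n) : uniq [:: x1; x2; x3; x4] ->
  a \in [:: x1; x2] -> a' \in [:: x3; x4] -> val a != val a'.
Proof.
rewrite val_eqE -[[:: x1; x2; x3; x4]]/([:: x1; x2] ++ [:: x3; x4]) cat_uniq.
case/and3P => _ /hasPn h _ ha ha'; apply/eqP => e; subst.
by move: (h a' ha'); rewrite ha.
Qed.

Lemma validA_hA P : validA (hA P).
Proof.
move=> x1 x2 x3 x4 U _ _ _ _ s12 s34 h1 h2 h3 h4.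
have [a [b [ain aA ha bB hb]]] := @pick_side (fun v => ~~ hA P v) _ _ s12 h1 h2.
have [a' [b' [ain' aA' ha' bB' hb']]] := @pick_side (fun v => ~~ hA P v) _ _ s34 h3 h4.
have := uniq_cross U ain ain'.
move: ha hb ha' hb'; clear h1 h2 h3 h4; case: P => [[c be]|al] /=; rewrite aA aA' leqNgt bB leqNgt bB' //=.
by case: c => //= /negPn/eqP -> _ /negPn/eqP ->.
Qed.

Lemma validA_nnhA P : validA (fun v => ~~ ~~ hA P v).
Proof. by move=> x1 x2 x3 x4; rewrite !negbK; apply: validA_hA. Qed.

Lemma validB_hB P : validB (hB P).
Proof.
move=> x1 x2 x3 x4 U _ _ _ _ s12 s34 h1 h2 h3 h4.
have [a [b [ain aA ha bB hb]]] := @pick_side (fun v => ~~ hB P v) _ _ s12 h1 h2.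
have [a' [b' [ain' aA' ha' bB' hb']]] := @pick_side (fun v => hB P v) _ _ s34 h3 h4.
move: ha hb ha' hb'; clear h1 h2 h3 h4; case: P => [[c be]|al] /=; rewrite aA aA' leqNgt bB leqNgt bB' //=.
by case: c.
Qed.

Lemma vval k : k <= p + q -> val (inord k : 'I_n) = k.
Proof. by move=> h; apply: inordK. Qed.

Lemma ob_val b (j : 'I_q) : ob b (val j) = b j.
Proof. by rewrite /ob valK. Qed.
Lemma oa_val a (j : 'I_(p - 2)) : oa a (val j) = a j.
Proof. by rewrite /oa valK. Qed.

Section Inj.
Hypothesis p2 : 2 <= p.

Lemma hA_inj P1 P2 : (forall v : 'I_n, val v != 0 -> hA P1 v = hA P2 v) -> P1 = P2.
Proof.
move=> e.
have ev k : 0 < k -> k <= p + q -> hA P1 (inord k) = hA P2 (inord k).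
  by move=> k0 kn; apply: e; rewrite vval // -lt0n.
have eB : forall b1 b2 c1 c2, (forall j : 'I_q, ob b1 (p.+1 + j - p.+1) = ob b2 (p.+1 + j - p.+1)) ->
   c1 = c2 -> (inl (c1, b1) : Pat) = inl (c2, b2).
  move=> b1' b2' c1 c2 h ->; congr (inl (_, _)); apply/ffunP => j.
  by move: (h j); rewrite addKn !ob_val.
have eA : forall a1 a2, (forall j : 'I_(p - 2), oa a1 (j + 3 - 3) = oa a2 (j + 3 - 3)) ->
   (inr a1 : Pat) = inr a2.
  move=> a1 a2 h; congr inr; apply/ffunP => j.
  by move: (h j); rewrite addnK !oa_val.
have e1 := ev 1 isT ltac:(lia).
have e2 := ev 2 isT ltac:(lia).
have eb (j : 'I_q) : hA P1 (inord (p.+1 + j)) = hA P2 (inord (p.+1 + j)).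
  by apply: ev => //; move: (ltn_ord j); lia.
have ea (j : 'I_(p - 2)) : hA P1 (inord (j + 3)) = hA P2 (inord (j + 3)).
  by apply: ev; move: (ltn_ord j); lia.
have jA (j : 'I_(p - 2)) : j + 3 <= p by move: (ltn_ord j); lia.
move: e1 e2 eb ea; clear e ev; rewrite /hA !vval; try lia.
case: P1 => [[c1 b1]|a1]; case: P2 => [[c2 b2]|a2] /= e1 e2 eb ea.
- have p0 : 0 < p by lia.
  apply: eB; last by move: e1; clear e2 eb ea; rewrite p0; case: c1; case: c2.
  move=> j; move: (eb j); rewrite vval; last by move: (ltn_ord j); lia.
  by have -> : (p.+1 + j <= p) = false by lia.
- by move: e2; clear e1 eb ea; rewrite p2; case: c1.
- by move: e2; clear e1 eb ea; rewrite p2; case: c2.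
- apply: eA => j; move: (ea j); rewrite vval; last by move: (ltn_ord j); lia.
  rewrite (jA j); have -> : (j + 3 == 1) = false by lia.
  by have -> : (j + 3 == 2) = false by lia.
Qed.

Lemma hB_inj P1 P2 : (forall v : 'I_n, val v != 0 -> hB P1 v = hB P2 v) -> P1 = P2.
Proof.
move=> e.
have ev k : 0 < k -> k <= p + q -> hB P1 (inord k) = hB P2 (inord k).
  by move=> k0 kn; apply: e; rewrite vval // -lt0n.
have eB : forall b1 b2 c1 c2, (forall j : 'I_q, ob b1 (p.+1 + j - p.+1) = ob b2 (p.+1 + j - p.+1)) ->
   c1 = c2 -> (inl (c1, b1) : Pat) = inl (c2, b2).
  move=> b1' b2' c1 c2 h ->; congr (inl (_, _)); apply/ffunP => j.
  by move: (h j); rewrite addKn !ob_val.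
have eA : forall a1 a2, (forall j : 'I_(p - 2), oa a1 (j + 3 - 3) = oa a2 (j + 3 - 3)) ->
   (inr a1 : Pat) = inr a2.
  move=> a1 a2 h; congr inr; apply/ffunP => j.
  by move: (h j); rewrite addnK !oa_val.
have e1 := ev 1 isT ltac:(lia).
have e2 := ev 2 isT ltac:(lia).
have eb (j : 'I_q) : hB P1 (inord (p.+1 + j)) = hB P2 (inord (p.+1 + j)).
  by apply: ev => //; move: (ltn_ord j); lia.
have ea (j : 'I_(p - 2)) : hB P1 (inord (j + 3)) = hB P2 (inord (j + 3)).
  by apply: ev; move: (ltn_ord j); lia.
have jA (j : 'I_(p - 2)) : j + 3 <= p by move: (ltn_ord j); lia.
move: e1 e2 eb ea; clear e ev; rewrite /hB !vval; try lia.
case: P1 => [[c1 b1]|a1]; case: P2 => [[c2 b2]|a2] /= e1 e2 eb ea.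
- have p0 : 0 < p by lia.
  apply: eB; last by move: e1; clear e2 eb ea; rewrite p0.
  move=> j; move: (eb j); rewrite vval; last by move: (ltn_ord j); lia.
  by have -> : (p.+1 + j <= p) = false by lia.
- have p0 : 0 < p by lia.
  by move: e1 e2; clear eb ea; rewrite p0 p2; case: c1.
- have p0 : 0 < p by lia.
  by move: e1 e2; clear eb ea; rewrite p0 p2; case: c2.
- apply: eA => j; move: (ea j); rewrite vval; last by move: (ltn_ord j); lia.
  rewrite (jA j); have -> : (j + 3 == 1) = false by lia.
  by have -> : (j + 3 == 2) = false by lia.
Qed.

End Inj.

Definition gof (gf : {ffun 'I_p * 'I_q -> bool}) (x y : 'I_n) : bool :=
  match (insub (val x).-1 : option 'I_p), (insub (val y - p.+1) : option 'I_q) with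
  | Some i, Some j => gf (i, j)
  | _, _ => false
  end.

Lemma arc_AB g h (i : 'I_p) (j : 'I_q) :
  ((inord i.+1, inord (p.+1 + j)) \in mkO g h) =
  g (inord i.+1) (inord (p.+1 + j)).
Proof.
have hi : i.+1 <= p + q by move: (ltn_ord i); lia.
have hj : p.+1 + j <= p + q by move: (ltn_ord j); lia.
rewrite inE /arc /gadj /= !vval //.
have -> : (inord i.+1 != inord (p.+1 + j) :> 'I_n).
  by rewrite -val_eqE /= !vval //; move: (ltn_ord i); lia.
have -> : (p.+1 + j <= p) = false by lia.
by have -> : (i.+1 <= p) by move: (ltn_ord i); lia.
Qed.

Lemma gof_ij gf (i : 'I_p) (j : 'I_q) :
  gof gf (inord i.+1) (inord (p.+1 + j)) = gf (i, j).
Proof.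
have hi : i.+1 <= p + q by move: (ltn_ord i); lia.
have hj : p.+1 + j <= p + q by move: (ltn_ord j); lia.
by rewrite /gof !vval //= addKn !valK.
Qed.

Lemma arc_hub g h (v : 'I_n) : val v != 0 -> ((ord0, v) \in mkO g h) = h v.
Proof.
move=> v0; rewrite inE /arc /gadj /=.
have -> : (ord0 != v) by rewrite -val_eqE /= eq_sym.
by [].
Qed.

Notation Dom := ({ffun 'I_p * 'I_q -> bool} * Pat)%type.

Lemma count_lb (H : {set 'I_5 * 'I_5}) (hp : Pat -> 'I_n -> bool) :
  (forall P1 P2, (forall v : 'I_n, val v != 0 -> hp P1 v = hp P2 v) -> P1 = P2) ->
  (forall P gf, ~~ contains_dicopy H (mkO (gof gf) (hp P))) ->
  2 ^ (p * q) * #|{: Pat}| <= D n H.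
Proof.
move=> hinj hfree.
pose f := fun x : Dom => mkO (gof x.1) (hp x.2).
have finj : injective f.
  move=> [gf1 P1] [gf2 P2]; rewrite /f /= => e.
  have -> : gf1 = gf2.
    apply/ffunP => [[i j]].
    by move: (arc_AB (gof gf1) (hp P1) i j); rewrite e arc_AB !gof_ij.
  congr (_, _); apply: hinj => v v0.
  by rewrite -(arc_hub (gof gf1) (hp P1) v0) e arc_hub.
have -> : 2 ^ (p * q) * #|{: Pat}| = #|[set f x | x in [set: Dom]]|.
  by rewrite card_imset // cardsT card_prod card_ffun card_bool card_prod !card_ord.
apply: leq_trans (leq_bigmax_cond _ (G_simple)).
apply: subset_leq_card; apply/subsetP => O /imsetP[[gf P] _ ->].
by rewrite inE mkO_orient hfree.
Qed.

End Constr.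

Lemma card_Pat p q : #|{: ((bool * {ffun 'I_q -> bool}) + {ffun 'I_(p - 2) -> bool})%type}| = (2 ^ q).*2 + 2 ^ (p - 2).
Proof. by rewrite card_sum card_prod !card_ffun card_bool !card_ord mul2n. Qed.

Lemma ex_bound p q : 2 <= p -> (q == p) || (q == p.+1) ->
  ex (p + q).+1 bowtie <= q * p.+1 + 1.
Proof.
move=> p2 hq; apply/bigmax_leqP => E /andP[sE nB].
have := turan sE nB (S := [set: 'I_(p + q).+1]).
have -> : eS E [set: 'I_(p + q).+1] = E by apply/setP => e; rewrite inE subsetT andbT.
rewrite cardsT card_ord; move: #|E| => e; clear sE nB E.
case/orP: hq => /eqP ->.
  have -> : (p + p).+1 = (p.*2).+1 by rewrite addnn.
  rewrite /= odd_double /= -muln2 => h.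
  by have := h ltac:(lia); nia.
have -> : (p + p.+1).+1 = (p.+1).*2 by rewrite -muln2; lia.
rewrite odd_double -muln2 => h.
by have := h ltac:(lia); nia.
Qed.

Lemma main_pq p q (H : {set 'I_5 * 'I_5}) : 2 <= p -> (q == p) || (q == p.+1) ->
  orientation bowtie H ->
  ( ((b1, bc) \in H /\ (b2, bc) \in H /\ (b3, bc) \in H /\ (b4, bc) \in H)
    \/ ((bc, b1) \in H /\ (bc, b2) \in H /\ (bc, b3) \in H /\ (bc, b4) \in H)
    \/ ((b1, bc) \in H /\ (b2, bc) \in H /\ (bc, b3) \in H /\ (bc, b4) \in H)
    \/ ((bc, b1) \in H /\ (bc, b2) \in H /\ (b3, bc) \in H /\ (b4, bc) \in H) ) ->
  2 ^ ex (p + q).+1 bowtie < D (p + q).+1 H.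
Proof.
move=> p2 hq oH hyp.
have lb : 2 ^ (p * q) * #|{: ((bool * {ffun 'I_q -> bool}) + {ffun 'I_(p - 2) -> bool})%type}| <= D (p + q).+1 H.
  case: hyp => [[h1 [h2 [h3 h4]]]|[[h1 [h2 [h3 h4]]]|[[h1 [h2 [h3 h4]]]|[h1 [h2 [h3 h4]]]]]].
  - apply: (@count_lb p q H (@hA p q)); first exact: hA_inj.
    by move=> P gf; apply: free1 => //; apply: validA_hA.
  - apply: (@count_lb p q H (fun P v => ~~ @hA p q P v)).
      move=> P1 P2 e; apply: hA_inj => // v v0.
      by apply: negb_inj; apply: e.
    by move=> P gf; apply: free2 => //; apply: validA_nnhA.
  - apply: (@count_lb p q H (@hB p q)); first exact: hB_inj.
    by move=> P gf; apply: free3 => //; apply: validB_hB.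
  - apply: (@count_lb p q H (@hB p q)); first exact: hB_inj.
    by move=> P gf; apply: free4 => //; apply: validB_hB.
apply: leq_trans lb; rewrite card_Pat.
apply: (@leq_ltn_trans (2 ^ (q * p.+1 + 1))).
  by rewrite leq_exp2l //; apply: ex_bound.
have -> : q * p.+1 + 1 = p * q + q.+1 by nia.
rewrite mulnDr -mul2n -expnS -expnD -[X in X < _]addn0 ltn_add2l.
by rewrite muln_gt0 !expn_gt0.
Qed.

Theorem mainTheorem6 (H : {set ('I_5 * 'I_5)}) :
  orientation bowtie H ->
  ( (* (a) all four center edges into the center, or all four out of it *)
    ((b1, bc) \in H /\ (b2, bc) \in H /\ (b3, bc) \in H /\ (b4, bc) \in H)
    \/ ((bc, b1) \in H /\ (bc, b2) \in H /\ (bc, b3) \in H /\ (bc, b4) \in H)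
    (* (b) one triangle's center edges both in, the other's both out *)
    \/ ((b1, bc) \in H /\ (b2, bc) \in H /\ (bc, b3) \in H /\ (bc, b4) \in H)
    \/ ((bc, b1) \in H /\ (bc, b2) \in H /\ (b3, bc) \in H /\ (b4, bc) \in H) ) ->
  exists N : nat, forall n : nat, N <= n -> 2 ^ ex n bowtie < D n H.
Proof.
move=> oH hyp; exists 6 => n n6.
have [p [q [-> p2 hq]]] : exists p q, [/\ n = (p + q).+1, 2 <= p & (q == p) || (q == p.+1)].
  exists (n.-1 - n./2), n./2.
  move: (odd_double_half n); case: (odd n) => /= hn; rewrite -hn in n6 *;
    rewrite -muln2 in n6 *; split; lia.
exact: main_pq.
Qed.
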